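(* Let $F$ be a finite field of odd characteristic in which $-1$ is not a square, and let $g:F^3\to\mathbb{C}$ satisfy $g\sim 1$ on its support $G$. Then $$\|\widehat{g}\|_{L^2(P,d\sigma)} \lesssim \|g\|_{L^2(F^3)} + |G|^{3/8}\Big(\sum_{z\in F}\|g_z*K\|_{L^4(F^3)}^2 + \sum_{\substack{z,z'\in F\\ z\neq z'}}\big\|(g_z*K)\,(g_{z'}*K)\big\|_{L^2(F^3)}\Big)^{1/4}.$$
   Context: $e:(F,+)\to\mathbb{C}^\times$ is a fixed nontrivial additive character; $x\cdot y=\sum_i x_iy_i$ on $F^d$; points of $F^3$ are $x=(\underline{x},x_3)$, $\underline{x}\in F^2$. $P=\{(\underline{x},\underline{x}\cdot\underline{x}):\underline{x}\in F^2\}$. $F^3$ carries counting measure: $\|h\|_{L^p(F^3)}=(\sum_x|h(x)|^p)^{1/p}$, $(h_1*h_2)(x)=\sum_{y\in F^3}h_1(y)h_2(x-y)$. $(d\sigma)^{\vee}(x)=|F|^{-2}\sum_{\xi\in P}e(x\cdot\xi)$, $\delta$ is the indicator of $0\in F^3$, and $K:=(d\sigma)^{\vee}-\delta$. $\widehat{g}(\xi)=\sum_{x\in F^3}g(x)e(-x\cdot\xi)$, $\|\widehat{g}\|_{L^2(P,d\sigma)}=(|F|^{-2}\sum_{\xi\in P}|\widehat{g}(\xi)|^2)^{1/2}$. ''$g\sim1$ on its support $G$'' means $G=\{x:g(x)\ne0\}$ and $\tfrac12\le|g|\le2$ on $G$. For $z\in F$, $g_z(x)=g(x)$ if $x_3=z$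 and $g_z(x)=0$ otherwise. $X\lesssim Y$ means $X\le CY$ with $C$ an absolute constant independent of $F$ and $g$. *)

(* Defs.v *)
From HB Require Import structures.
From mathcomp Require Import all_boot all_algebra.
From mathcomp Require Import reals.
From mathcomp.real_closed Require Export complex.
Set Implicit Arguments. Unset Strict Implicit. Unset Printing Implicit Defensive.
Import GRing.Theory Num.Theory.
Local Open Scope ring_scope.

Section Defs.
Variables (R : realType) (F : finFieldType).
Local Notation C := (R[i]).

Definition pt := {ffun 'I_3 -> F}.
Definition i2 : 'I_3 := @Ordinal 3 2 isT.

Definition dot (x y : pt) : F := \sum_i x i * y i.

Definition cabs (z : C) : R := Num.sqrt (complex.Re z ^+ 2 + complex.Im z ^+ 2).

Definition paralift (u : {ffun 'I_2 -> F}) : pt :=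
  [ffun i : 'I_3 => if (i < 2)%N then u (inord i) else \sum_j u j * u j].

Definition Pset : {set pt} := [set paralift u | u : {ffun 'I_2 -> F}].

Definition nontriv_add_char (e : F -> C) : Prop :=
  (forall a b, e (a + b) = e a * e b) /\ (forall a, e a != 0) /\ (exists a, e a != 1).

Variable e : F -> C.

Definition qF : R := #|F|%:R.

Definition dsigma_check (x : pt) : C := (#|F|%:R : C) ^- 2 * \sum_(xi in Pset) e (dot x xi).
Definition delta0 (x : pt) : C := (x == 0)%:R.
Definition Kfun (x : pt) : C := dsigma_check x - delta0 x.

Definition fhat (g : pt -> C) (xi : pt) : C := \sum_x g x * e (- dot x xi).

Definition L2P (g : pt -> C) : R :=
  Num.sqrt (qF ^- 2 * \sum_(xi in Pset) cabs (fhat g xi) ^+ 2).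

Definition L2 (h : pt -> C) : R := Num.sqrt (\sum_x cabs (h x) ^+ 2).
Definition L4 (h : pt -> C) : R := Num.sqrt (Num.sqrt (\sum_x cabs (h x) ^+ 4)).

Definition conv (h1 h2 : pt -> C) (x : pt) : C := \sum_y h1 y * h2 (x - y).

Definition slice (g : pt -> C) (z : F) (x : pt) : C := if x i2 == z then g x else 0.

Definition supp (g : pt -> C) : {set pt} := [set x | g x != 0].
Definition sim1 (g : pt -> C) : Prop :=
  forall x, x \in supp g -> 2^-1 <= cabs (g x) <= 2.

End Defs.

(* real powers used in the statement, written with square roots:
   root4 t = t^{1/4},  pow38 t = t^{3/8} for t >= 0 *)
Definition root4 (R : realType) (t : R) : R := Num.sqrt (Num.sqrt t).
Definition pow38 (R : realType) (t : R) : R := Num.sqrt (Num.sqrt (Num.sqrt (t ^+ 3))).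

(* Main.v *)
Require Import Defs.
From HB Require Import structures.
From mathcomp Require Import all_boot all_order all_algebra all_field.
From mathcomp Require Import reals.
From mathcomp.real_closed Require Import complex.
From mathcomp Require Import lra ring.
Import Order.TTheory GRing.Theory Num.Theory.
Local Open Scope ring_scope.
Section Cabs.
Variable R : realType.
Local Notation C := (R[i]).
Local Open Scope complex_scope.

Lemma cabsE (z : C) : (cabs z)%:C = `|z|.
Proof. by rewrite normc_def. Qed.

Lemma cabs_ge0 (z : C) : 0 <= cabs z.
Proof. exact: sqrtr_ge0. Qed.

Lemma cabsM (z w : C) : cabs (z * w) = cabs z * cabs w.
Proof. by apply: complexI; rewrite rmorphM /= !cabsE normrM. Qed.

Lemma cabs_sum (I : finType) (f : I -> C) : cabs (\sum_i f i) <= \sum_i cabs (f i).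
Proof.
rewrite -lecR cabsE rmorph_sum /=.
rewrite [X in _ <= X](eq_bigr (fun i => `|f i|)); last by move=> i _; exact: cabsE.
exact: ler_norm_sum.
Qed.


Lemma cabs2 (z : C) : ((cabs z) ^+ 2)%:C = z * z^*%C.
Proof. by rewrite rmorphXn /= cabsE sqr_normc. Qed.

Lemma Re_le_cabs (z : C) : (complex.Re z <= cabs z)%R.
Proof.
apply: le_trans (ler_norm (complex.Re z)) _; rewrite -lecR cabsE; exact: normc_ge_Re.
Qed.

Lemma ReD (a b : C) : complex.Re (a + b) = complex.Re a + complex.Re b.
Proof. by case: a; case: b. Qed.

Lemma ReR (a : R) : complex.Re (a%:C) = a.
Proof. by []. Qed.
End Cabs.

Section Char.
Variables (R : realType) (F : finFieldType) (e : F -> R[i]).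
Hypothesis he : nontriv_add_char e.
Local Open Scope complex_scope.

Lemma e0 : e 0 = 1.
Proof.
case: he => eD [en _]; apply: (mulfI (en 0)).
by rewrite -eD addr0 mulr1.
Qed.

Lemma eMn a n : e (a *+ n) = e a ^+ n.
Proof.
case: he => eD _; elim: n => [|n IH]; first by rewrite mulr0n expr0 e0.
by rewrite mulrS exprS eD IH.
Qed.

Lemma eN a : e a * e (- a) = 1.
Proof. by case: he => eD _; rewrite -eD subrr e0. Qed.

Lemma enorm a : `|e a| = 1.
Proof.
case: (finPcharP F) => p pp pc.
have : `|e a| ^+ p == 1 by rewrite -normrX -eMn (mulrn_pchar pc) e0 normr1.
by rewrite pexpr_eq1 ?prime_gt0 // => /eqP.
Qed.

Lemma econj a : (e a)^*%C = e (- a).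
Proof.
case: he => eD [en _]; apply: (mulfI (en a)).
by rewrite -sqr_normc enorm expr1n eN.
Qed.
End Char.

Section Ident.
Variables (R : realType) (F : finFieldType) (e : F -> R[i]).
Hypothesis he : nontriv_add_char e.
Local Open Scope complex_scope.

Lemma dotB (x y xi : pt F) : dot (y - x) xi = dot y xi - dot x xi.
Proof. by rewrite /dot -sumrB; apply: eq_bigr => i _; rewrite !ffunE mulrBl. Qed.

Lemma fhat_conj (g : pt F -> R[i]) xi :
  (fhat e g xi)^*%C = \sum_y (g y)^*%C * e (dot y xi).
Proof.
rewrite /fhat rmorph_sum; apply: eq_bigr => y _.
rewrite rmorphM /=. rewrite (@econj _ _ _ he). by rewrite opprK.
Qed.

Lemma fhat_sq (g : pt F -> R[i]) xi :
  fhat e g xi * (fhat e g xi)^*%C =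
  \sum_x \sum_y g x * (g y)^*%C * e (dot (y - x) xi).
Proof.
case: (he) => eD _.
rewrite fhat_conj /fhat.
rewrite mulr_suml; apply: eq_bigr => x _; rewrite mulr_sumr; apply: eq_bigr => y _.
rewrite dotB eD; ring.
Qed.

Lemma L2P_sq (g : pt F -> R[i]) :
  ((L2P e g) ^+ 2)%:C = \sum_y (g y)^*%C * \sum_x g x * dsigma_check e (y - x).
Proof.
rewrite /L2P sqr_sqrtr; last first.
  by rewrite mulr_ge0 ?invr_ge0 ?exprn_ge0 ?ler0n ?sumr_ge0 // => i _; rewrite exprn_ge0 ?cabs_ge0.
rewrite rmorphM /= fmorphV rmorphXn /= rmorph_nat.
rewrite rmorph_sum /=. under eq_bigr do rewrite cabs2 fhat_sq.
transitivity (\sum_(xi in Pset F) \sum_x \sum_y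
   (#|F|%:R ^- 2 * (g x * (g y)^*%C * e (dot (y - x) xi)))).
  rewrite mulr_sumr; apply: eq_bigr => xi _; rewrite mulr_sumr.
  by apply: eq_bigr => x _; rewrite mulr_sumr.
rewrite exchange_big /=; under eq_bigr do rewrite exchange_big /=.
rewrite exchange_big /=.
apply: eq_bigr => y _; rewrite mulr_sumr; apply: eq_bigr => x _.
rewrite /dsigma_check !mulr_sumr; apply: eq_bigr => xi _; ring.
Qed.
End Ident.

Section Ident2.
Variables (R : realType) (F : finFieldType) (e : F -> R[i]).
Hypothesis he : nontriv_add_char e.
Local Open Scope complex_scope.

Definition Hf (g : pt F -> R[i]) y := \sum_z conv (slice g z) (Kfun e) y.

Lemma slice_sum (g : pt F -> R[i]) x : \sum_z slice g z x = g x.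
Proof.
rewrite (bigD1 (x i2)) //= big1 ?addr0; first by rewrite /slice eqxx.
by move=> z /negPf zx; rewrite /slice eq_sym zx.
Qed.

Lemma Hf_conv (g : pt F -> R[i]) y : Hf g y = conv g (Kfun e) y.
Proof.
rewrite /Hf /conv exchange_big /=; apply: eq_bigr => x _.
by rewrite -mulr_suml slice_sum.
Qed.

Lemma delta_sum (g : pt F -> R[i]) y : \sum_x g x * delta0 R (y - x) = g y.
Proof.
rewrite (bigD1 y) //= big1 ?addr0; first by rewrite /delta0 subrr eqxx mulr1.
by move=> x xy; rewrite /delta0 subr_eq0 eq_sym (negPf xy) mulr0.
Qed.

Lemma L2P_sq2 (g : pt F -> R[i]) :
  ((L2P e g) ^+ 2)%:C = ((L2 g) ^+ 2)%:C + \sum_y (g y)^*%C * Hf g y.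
Proof.
rewrite (@L2P_sq _ _ _ he) /L2 sqr_sqrtr; last by apply: sumr_ge0 => i _; rewrite exprn_ge0 ?cabs_ge0.
rewrite rmorph_sum /= -big_split /=; apply: eq_bigr => y _.
rewrite cabs2 Hf_conv /conv.
have -> : \sum_x g x * dsigma_check e (y - x) =
   \sum_x g x * Kfun e (y - x) + \sum_x g x * delta0 R (y - x).
  by rewrite -big_split /=; apply: eq_bigr => x _; rewrite -mulrDr /Kfun subrK.
by rewrite delta_sum; ring.
Qed.

Lemma L2P_bound (g : pt F -> R[i]) :
  (L2P e g) ^+ 2 <= (L2 g) ^+ 2 + \sum_y cabs (g y) * cabs (Hf g y).
Proof.
have := congr1 (@complex.Re R) (L2P_sq2 g).
rewrite ReD !ReR => ->; rewrite lerD2l.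
apply: le_trans (@Re_le_cabs R _) _; apply: le_trans (@cabs_sum R _ _) _.
apply: ler_sum => y _; rewrite cabsM; apply: ler_wpM2r; first exact: cabs_ge0.
by case: (g y) => a b; rewrite /cabs /= sqrrN.
Qed.
End Ident2.
Section CS.
Variable R : realType.

Lemma cs_sq (I : finType) (a b : I -> R) :
  (\sum_i a i * b i) ^+ 2 <= (\sum_i a i ^+ 2) * (\sum_i b i ^+ 2).
Proof.
set P := fun i j => (a i * b i) * (a j * b j).
have E1 : (\sum_i a i ^+ 2) * (\sum_i b i ^+ 2) = \sum_i \sum_j a i ^+ 2 * b j ^+ 2.
  by rewrite big_distrlr.
have E2 : (\sum_i a i * b i) ^+ 2 = \sum_i \sum_j P i j.
  by rewrite expr2 big_distrlr.
have E3 : \sum_i \sum_j (a i * b j - a j * b i) ^+ 2 =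
   \sum_i \sum_j (a i ^+ 2 * b j ^+ 2 - P i j) + \sum_i \sum_j (a j ^+ 2 * b i ^+ 2 - P i j).
  rewrite -big_split /=; apply: eq_bigr => i _; rewrite -big_split /=.
  by apply: eq_bigr => j _; rewrite /P; ring.
have E4 : \sum_i \sum_j (a j ^+ 2 * b i ^+ 2 - P i j) = \sum_i \sum_j (a i ^+ 2 * b j ^+ 2 - P i j).
  rewrite exchange_big /=; apply: eq_bigr => i _; apply: eq_bigr => j _.
  by rewrite /P [X in _ - X]mulrC.
have H : 0 <= \sum_i \sum_j (a i * b j - a j * b i) ^+ 2.
  by apply: sumr_ge0 => i _; apply: sumr_ge0 => j _; apply: sqr_ge0.
rewrite E3 E4 in H.
have E5 : \sum_i \sum_j (a i ^+ 2 * b j ^+ 2 - P i j) =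
   (\sum_i a i ^+ 2) * (\sum_i b i ^+ 2) - (\sum_i a i * b i) ^+ 2.
  rewrite E1 E2 -sumrB; apply: eq_bigr => i _; by rewrite -sumrB.
rewrite E5 in H; lra.
Qed.

Lemma cs (I : finType) (a b : I -> R) :
  \sum_i a i * b i <= Num.sqrt (\sum_i a i ^+ 2) * Num.sqrt (\sum_i b i ^+ 2).
Proof.
have A0 : 0 <= \sum_i a i ^+ 2 by apply: sumr_ge0 => i _; apply: sqr_ge0.
rewrite -sqrtrM //; apply: le_trans (ler_norm _) _.
by rewrite -sqrtr_sqr ler_wsqrtr // cs_sq.
Qed.
End CS.
Section Est.
Variable R : realType.

Lemma cabs0 : cabs (0 : R[i]) = 0.
Proof. by apply: complexI; rewrite cabsE normr0. Qed.

Lemma part2 (I : finType) (P : pred I) (h : I -> R) :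
  (forall i, 0 <= h i) ->
  \sum_i (P i)%:R * h i <=
  Num.sqrt (\sum_i (P i)%:R) * Num.sqrt (Num.sqrt (\sum_i (P i)%:R) * Num.sqrt (\sum_i h i ^+ 4)).
Proof.
move=> h0.
have ind2 : forall i, ((P i)%:R : R) ^+ 2 = (P i)%:R by move=> i; case: (P i); rewrite ?expr0n ?expr1n.
have -> : \sum_i ((P i)%:R : R) * h i = \sum_i (P i)%:R * ((P i)%:R * h i).
  by apply: eq_bigr => i _; rewrite mulrA -expr2 ind2.
apply: le_trans (@cs R _ _ _) _.
under eq_bigr do rewrite ind2.
apply: ler_wpM2l; first exact: sqrtr_ge0.
apply: ler_wsqrtr.
have -> : \sum_i ((P i)%:R * h i) ^+ 2 = \sum_i ((P i)%:R : R) * h i ^+ 2.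
  by apply: eq_bigr => i _; rewrite exprMn ind2.
apply: le_trans (@cs R _ _ _) _.
under eq_bigr do rewrite ind2.
by under [X in _ * Num.sqrt X <= _]eq_bigr do rewrite -exprM.
Qed.

Lemma part3 (I J : finType) (c : J -> I -> R[i]) :
  \sum_y cabs (\sum_z c z y) ^+ 4 <=
  (\sum_(k : J * J) Num.sqrt (\sum_y cabs (c k.1 y * c k.2 y) ^+ 2)) ^+ 2.
Proof.
set a := fun (k : J * J) y => cabs (c k.1 y * c k.2 y).
have a0 : forall k y, 0 <= a k y by move=> k y; exact: cabs_ge0.
have step1 : forall y, cabs (\sum_z c z y) ^+ 4 <= (\sum_k a k y) ^+ 2.
  move=> y.
  have u0 : 0 <= cabs (\sum_z c z y) ^+ 2 by rewrite exprn_ge0 ?cabs_ge0.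
  have uv : cabs (\sum_z c z y) ^+ 2 <= \sum_k a k y.
    rewrite expr2 -cabsM big_distrlr /= pair_bigA /=.
    exact: (@cabs_sum R _ (fun k : J * J => c k.1 y * c k.2 y)).
  rewrite -[4%N]/(2 * 2)%N exprM [X in _ <= X]expr2 expr2.
  exact: ler_pM.
apply: le_trans (ler_sum _ (fun y _ => step1 y)) _.
have -> : \sum_y (\sum_k a k y) ^+ 2 = \sum_k \sum_l \sum_y a k y * a l y.
  rewrite (eq_bigr (fun y => \sum_k \sum_l a k y * a l y)); last first.
    by move=> y _; rewrite expr2 big_distrlr.
  rewrite exchange_big /=; apply: eq_bigr => k _.
  by rewrite exchange_big.
rewrite expr2 big_distrlr /=; apply: ler_sum => k _; apply: ler_sum => l _.
exact: (@cs R _ (a k) (a l)).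
Qed.
End Est.

Lemma final_alg (R : realType) (X A N T S : R) :
  0 <= X -> 0 <= A -> 0 <= N -> 0 <= T -> 0 <= S -> Num.sqrt T <= S ->
  X ^+ 2 <= A ^+ 2 + 2 * (Num.sqrt N * Num.sqrt (Num.sqrt N * Num.sqrt T)) ->
  X <= 2 * (A + pow38 N * root4 S).
Proof.
move=> X0 A0 N0 T0 S0 TS H.
set B := pow38 N * root4 S.
have B0 : 0 <= B by rewrite mulr_ge0 ?sqrtr_ge0.
have HB : Num.sqrt N * Num.sqrt (Num.sqrt N * Num.sqrt T) <= B ^+ 2.
  rewrite /B /pow38 /root4 exprMn !sqr_sqrtr ?sqrtr_ge0 //.
  apply: (@le_trans _ _ (Num.sqrt N * Num.sqrt (Num.sqrt N * S))).
    apply: ler_wpM2l; first exact: sqrtr_ge0.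
    by apply: ler_wsqrtr; apply: ler_wpM2l; first exact: sqrtr_ge0.
  rewrite sqrtrM ?sqrtr_ge0 // mulrA; apply: ler_wpM2r; first exact: sqrtr_ge0.
  rewrite -{1}(ger0_norm N0) -sqrtr_sqr -sqrtrM ?sqrtr_ge0 //.
  rewrite -sqrtrM ?exprn_ge0 // -exprSr; exact: le_refl.
have : X ^+ 2 <= A ^+ 2 + 2 * B ^+ 2 by apply: le_trans H _; rewrite lerD2l ler_pM2l.
nra.
Qed.

Theorem mainTheorem3 (R : realType) :
  exists c : R, 0 < c /\
  forall (F : finFieldType) (e : F -> R[i]),
    (2%:R : F) != 0 ->
    ~~ [exists x : F, x * x == -1] ->
    nontriv_add_char e ->
    forall g : pt F -> R[i],
      sim1 g ->
      L2P e g <=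
        c * (L2 g
             + pow38 (#|supp g|%:R : R) *
               root4 (\sum_(z : F) L4 (conv (slice g z) (Kfun e)) ^+ 2
                      + \sum_(z : F) \sum_(z' : F | z' != z)
                          L2 (fun x => conv (slice g z) (Kfun e) x
                                       * conv (slice g z') (Kfun e) x))).
Proof.
exists 2; split => //.
move=> F e _ _ he g hg.
set c := fun z => conv (slice g z) (Kfun e).
set S := \sum_(k : F * F) Num.sqrt (\sum_y cabs (c k.1 y * c k.2 y) ^+ 2).
have -> : \sum_(z : F) L4 (c z) ^+ 2 + \sum_(z : F) \sum_(z' : F | z' != z)
             L2 (fun x => c z x * c z' x) = S.
  rewrite /S -(pair_bigA _ (fun z z' => Num.sqrt (\sum_y cabs (c z y * c z' y) ^+ 2))) /=.
  rewrite -big_split /=; apply: eq_bigr => z _.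
  rewrite [in RHS](bigD1 z) //=; congr (_ + _).
  rewrite /L4 sqr_sqrtr ?sqrtr_ge0 //; congr Num.sqrt; apply: eq_bigr => y _.
  by rewrite cabsM -expr2 -exprM.
set N := (#|supp g|%:R : R).
set T := \sum_y cabs (Hf R F e g y) ^+ 4.
have T0 : 0 <= T by apply: sumr_ge0 => y _; rewrite exprn_ge0 ?cabs_ge0.
have S0 : 0 <= S by apply: sumr_ge0 => k _; exact: sqrtr_ge0.
have TS : Num.sqrt T <= S.
  rewrite -(ger0_norm S0) -sqrtr_sqr; apply: ler_wsqrtr.
  exact: (@part3 R _ _ c).
apply: (@final_alg R _ _ _ T S) => //.
- exact: sqrtr_ge0.
- exact: sqrtr_ge0.
apply: le_trans (@L2P_bound R F e he g) _; rewrite lerD2l.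
have Nsum : \sum_y ((y \in supp g)%:R : R) = N.
  rewrite /N -natr_sum; congr (_%:R).
  rewrite -sum1_card [RHS]big_mkcond /=; apply: eq_bigr => i _; by case: (i \in supp g).
rewrite -Nsum.
apply: (@le_trans _ _ (2 * \sum_y (y \in supp g)%:R * cabs (Hf R F e g y))).
  rewrite mulr_sumr; apply: ler_sum => y _.
  case: (boolP (y \in supp g)) => yin.
    rewrite mul1r; apply: ler_wpM2r; first exact: cabs_ge0.
    by case/andP: (hg y yin).
  move: yin; rewrite inE negbK => /eqP ->.
  by rewrite cabs0 !mul0r mulr0.
apply: ler_wpM2l => //.
exact: (@part2 R _ (fun y => y \in supp g) (fun y => cabs (Hf R F e g y)) (fun y => @cabs_ge0 R _)).
Qed.
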